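(* Let $G$ be a finite group which is neither cyclic nor isomorphic to a direct product of a cyclic group of odd order and a generalized quaternion group. If $|Z(G)|$ has at least two distinct prime divisors, then the difference graph $\mathcal{D}(G)$ is connected and has diameter at most $5$.
   Context: For a finite group $G$ with identity $e$: the intersection power graph $\mathcal{G}_I(G)$ has vertex set $G$, two distinct non-identity vertices $x,y$ being adjacent iff $\langle x\rangle\cap\langle y\rangle\neq\{e\}$, and $e$ being adjacent to every other vertex. The power graph $\mathcal{P}(G)$ has vertex set $G$, two distinct vertices being adjacent iff one is a power of the other. The difference graph $\mathcal{D}(G)$ is the graph on vertex set $G$ with edge set $E(\mathcal{G}_I(G))\setminus E(\mathcal{P}(G))$, with all isolated vertices removed. $Z(G)$ denotes the center of $G$. The generalized quaternion group $Q_{2^n}$ ($n\ge 3$) is $\langle x,y\mid x^{2^{n-1}}=1,\ y^2=x^{2^{n-2}},\ y^{-1}xy=x^{-1}\rangle$. *)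

(* Defs.v *)
From mathcomp Require Import all_boot all_order all_fingroup all_solvable.
Set Implicit Arguments. Unset Strict Implicit. Unset Printing Implicit Defensive.
Local Open Scope group_scope.

Section Graphs.
Variable gT : finGroupType.

(* Intersection power graph adjacency on vertex set G (x, y in G assumed). *)
Definition ipg_adj (x y : gT) : bool :=
  (x != y) && [|| x == 1, y == 1 | <[x]> :&: <[y]> != 1].

Definition pg_adj (x y : gT) : bool :=
  (x != y) && ((x \in <[y]>) || (y \in <[x]>)).

Definition diff_adj (x y : gT) : bool := ipg_adj x y && ~~ pg_adj x y.

Definition diff_vert (G : {set gT}) : {set gT} :=
  [set x in G | [exists y in G, diff_adj x y]].

(* A walk x = s_0, s_1, ..., s_k = y of length k = size s in D(G). *)
Definition diff_walk (G : {set gT}) (x : gT) (s : seq gT) : bool :=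
  all (mem (diff_vert G)) s && path diff_adj x s.

Definition diff_connected_diam_le (G : {set gT}) (d : nat) : Prop :=
  (exists x, x \in diff_vert G) /\
  forall x y, x \in diff_vert G -> y \in diff_vert G ->
    exists s : seq gT, [/\ diff_walk G x s, last x s = y & size s <= d].

End Graphs.

(* Main.v *)
Require Import Defs.
From mathcomp Require Import all_boot all_order all_fingroup all_solvable.
Set Implicit Arguments. Unset Strict Implicit. Unset Printing Implicit Defensive.
Local Open Scope group_scope.

Section Aux.
Variable gT : finGroupType.
Implicit Types x y z e f u v w : gT.

Lemma TI x (H : {group gT}) y : prime #[x] -> x \notin H -> y \in <[x]> -> y \in H -> y = 1.
Proof.
move=> px xH yx yH.
have := prime_TIg (G := <[x]>%G) (H := H) px; rewrite cycle_subG => /(_ xH) eq1.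
by apply/set1P; rewrite -[[set 1]]/(1 : {set gT}) -eq1 inE yx yH.
Qed.

Lemma adj_intro x y e : x != y -> e != 1 -> e \in <[x]> -> e \in <[y]> ->
  x \notin <[y]> -> y \notin <[x]> -> diff_adj x y.
Proof.
move=> nxy ne1 ex ey xy yx; rewrite /diff_adj /ipg_adj /pg_adj nxy /= negb_or xy yx !andbT.
apply/orP; right; apply/orP; right; apply/eqP=> I1.
have : e \in <[x]> :&: <[y]> by rewrite inE ex ey.
by rewrite I1 inE (negPf ne1).
Qed.

Lemma adj_sym x y : diff_adj x y = diff_adj y x.
Proof.
by rewrite /diff_adj /ipg_adj /pg_adj eq_sym setIC orbCA [(x \in _) || _]orbC.
Qed.

Lemma adj_elim v y : diff_adj v y -> v != 1 /\ ~~ prime #[v].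
Proof.
rewrite /diff_adj /ipg_adj /pg_adj => /andP[/andP[nvy H] /negP npg].
have v1 : v != 1.
  apply/negP=> /eqP v1; apply: npg; rewrite nvy v1 group1 //.
split=> //; apply/negP=> pv.
have vy : v \notin <[y]> by apply/negP=> vy; apply: npg; rewrite nvy vy.
have yv : y \notin <[v]> by apply/negP=> yv; apply: npg; rewrite nvy yv orbT.
move: H; rewrite (negPf v1) /=; case/orP=> [/eqP y1|]; first by rewrite y1 group1 in yv.
by rewrite (prime_TIg (G := <[v]>%G) pv) ?cycle_subG // eqxx.
Qed.

Lemma coprime_primes p q : prime p -> prime q -> p != q -> coprime p q.
Proof. by move=> pp pq npq; rewrite prime_coprime // dvdn_prime2 // (negPf npq). Qed.

Lemma pow_notin u e f (H : {group gT}) : commute u e -> u \in H -> f \in <[u * e]> ->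
  prime #[f] -> prime #[e] -> #[f] != #[e] -> f \notin H -> False.
Proof.
move=> cue uH /cycleP[k fk] pf pe nfe fH.
have h1 : f ^+ #[e] \in H.
  by rewrite fk -expgM mulnC expgM expgMn // expg_order mulg1 groupX // groupX.
have := TI pf fH (mem_cycle f #[e]) h1 => /eqP; rewrite -order_dvdn dvdn_prime2 //.
by rewrite (negPf nfe).
Qed.
Lemma K e f z : commute e f -> prime #[e] -> prime #[f] -> #[e] != #[f] ->
  e \in <[z]> -> f \notin <[z]> -> z \notin <[e]> -> diff_adj z (e * f).
Proof.
move=> cef pe pf nef ez fz ze.
have co : coprime #[e] #[f] by apply: coprime_primes.
have e_ef : e \in <[e * f]> by apply: (subsetP (cycleMsub cef co)); apply: cycle_id.
have f_ef : f \in <[e * f]>.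
  have := subsetP (cycleMsub (commute_sym cef) _) f (cycle_id f).
  by rewrite (commute_sym cef) coprime_sym => ->.
have e1 : e != 1.
  apply/negP=> /eqP h; move: pe; by rewrite h order1.
apply: (adj_intro (e := e)) => //.
- apply/eqP=> h; move: fz; by rewrite h f_ef.
- rewrite (cycleM cef co); apply/negP=> /mulsgP[x y hx hy zxy].
  have sez : <[e]> \subset <[z]> by rewrite cycle_subG.
  have xz : x \in <[z]> by apply: (subsetP sez).
  have yz : y \in <[z]>.
    have -> : y = x^-1 * z by rewrite zxy mulKg.
    by rewrite groupM ?groupV ?cycle_id.
  have y1 := TI pf fz hy yz.
  by move: ze; rewrite zxy y1 mulg1 hx.
- apply/negP=> h.
  have sez : <[e * f]> \subset <[z]> by rewrite cycle_subG.
  by move: fz; rewrite (subsetP sez).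
Qed.

Lemma memr e u : commute u e -> coprime #[u] #[e] -> e \in <[u * e]>.
Proof.
move=> cue co.
have := subsetP (cycleMsub (commute_sym cue) _) e (cycle_id e).
by rewrite (commute_sym cue) coprime_sym => ->.
Qed.

Lemma meml e u : commute u e -> coprime #[u] #[e] -> u \in <[u * e]>.
Proof. by move=> cue co; apply: (subsetP (cycleMsub cue co)); apply: cycle_id. Qed.

Lemma M e f u v : commute u e -> commute e f -> prime #[e] -> prime #[f] -> #[e] != #[f] ->
  coprime #[u] #[e] -> u \in <[v]> -> u != 1 -> v \notin <[u]> ->
  e \notin <[v]> -> f \notin <[v]> ->
  diff_adj v (u * e) /\ diff_adj (u * e) (e * f).
Proof.
move=> cue cef pe pf nef co uv u1 vu ev fv.
have u_ue := meml cue co.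
have e_ue := memr cue co.
have f_ue : f \notin <[u * e]>.
  apply/negP=> h; apply: (pow_notin cue uv h) => //; by rewrite eq_sym.
have ue_v : u * e \notin <[v]>.
  apply/negP=> h.
  have s : <[u * e]> \subset <[v]> by rewrite cycle_subG.
  by move: ev; rewrite (subsetP s).
split.
- apply: (adj_intro (e := u)) => //.
  + by apply/eqP=> h; move: ue_v; rewrite -h cycle_id.
  + rewrite (cycleM cue co); apply/negP=> /mulsgP[x y hx hy vxy].
    have s : <[u]> \subset <[v]> by rewrite cycle_subG.
    have xv : x \in <[v]> by apply: (subsetP s).
    have yv : y \in <[v]>.
      have -> : y = x^-1 * v by rewrite vxy mulKg.
      by rewrite groupM ?groupV ?cycle_id.
    have y1 := TI pe ev hy yv.
    by move: vu; rewrite vxy y1 mulg1 hx.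
- apply: K => //; apply/negP=> h.
  have s : <[u * e]> \subset <[e]> by rewrite cycle_subG.
  have := TI pe ev (subsetP s u u_ue) uv.
  by move/eqP; rewrite (negPf u1).
Qed.

Lemma N e_in e_out w v : commute w e_out -> commute e_in e_out ->
  prime #[e_in] -> prime #[e_out] -> #[e_in] != #[e_out] ->
  coprime #[w] #[e_out] -> w \notin <[v]> -> e_in \in <[v]> -> e_out \in <[v]> ->
  exists z, [/\ z = w \/ z = w * e_out, diff_adj v z & diff_adj z (e_in * e_out)].
Proof.
move=> cwe cio pin pout nio co wv inv outv.
have out1 : e_out != 1 by apply/negP=> /eqP h; move: pout; rewrite h order1.
have in1 : e_in != 1 by apply/negP=> /eqP h; move: pin; rewrite h order1.
case: (boolP (e_in \in <[w]>)) => inw.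
  have outw : e_out \notin <[w]>.
    apply/negP=> h; have := order_dvdG h; rewrite -orderE => d.
    have := coprime_dvdl d co; rewrite /coprime gcdnn => /eqP h1.
    by move: pout; rewrite h1.
  have vw : v \notin <[w]>.
    apply/negP=> h; have s : <[v]> \subset <[w]> by rewrite cycle_subG.
    by move: outw; rewrite (subsetP s).
  exists w; split; [by left | |].
  - apply: (adj_intro (e := e_in)) => //.
    by apply/eqP=> h; move: wv; rewrite -h cycle_id.
  - apply: K => //; apply/negP=> h.
    have s : <[w]> \subset <[e_in]> by rewrite cycle_subG.
    have s2 : <[e_in]> \subset <[v]> by rewrite cycle_subG.
    by move: wv; rewrite (subsetP s2) // (subsetP s) // cycle_id.
have w_z := meml cwe co.
have o_z := memr cwe co.
have i_z : e_in \notin <[w * e_out]>.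
  apply/negP=> h; exact: (pow_notin cwe (cycle_id w) h).
have zv : w * e_out \notin <[v]>.
  apply/negP=> h; have s : <[w * e_out]> \subset <[v]> by rewrite cycle_subG.
  by move: wv; rewrite (subsetP s).
exists (w * e_out); split; [by right | |].
- apply: (adj_intro (e := e_out)) => //.
  + by apply/eqP=> h; move: zv; rewrite -h cycle_id.
  + apply/negP=> h; have s : <[v]> \subset <[w * e_out]> by rewrite cycle_subG.
    by move: i_z; rewrite (subsetP s).
- rewrite cio; apply: (K (commute_sym cio)) => //; first by rewrite eq_sym.
  apply/negP=> h.
  have s : <[w * e_out]> \subset <[e_out]> by rewrite cycle_subG.
  have s2 : <[e_out]> \subset <[v]> by rewrite cycle_subG.
  by move: wv; rewrite (subsetP s2) // (subsetP s).
Qed.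
Lemma U v m : v != 1 -> ~~ prime #[v] -> coprime #[v] m ->
  exists u, [/\ u \in <[v]>, u != 1, v \notin <[u]> & coprime #[u] m].
Proof.
move=> v1 npv co.
set n := #[v].
have n1 : 1 < n.
  rewrite ltn_neqAle order_gt0 andbT eq_sym; by rewrite order_eq1.
set r := pdiv n.
have pr : prime r by apply: pdiv_prime.
have rn : r %| n by apply: pdiv_dvd.
have ou : #[v ^+ r] = n %/ r by apply: orderXdiv.
have r1 : 1 < r by apply: prime_gt1.
exists (v ^+ r); split.
- exact: mem_cycle.
- rewrite -order_eq1 ou; apply/eqP=> h.
  have : n = r by rewrite -(divnK rn) h mul1n.
  by move=> h2; move: npv; rewrite -/n h2 pr.
- apply/negP=> h; have d : n %| #[v ^+ r] := order_dvdG h.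
  rewrite ou in d.
  have pos : 0 < n %/ r by rewrite divn_gt0 ?(prime_gt0 pr) // (dvdn_leq (ltnW n1) rn).
  have := dvdn_leq pos d.
  by rewrite leqNgt ltn_Pdiv // ltnW.
- apply: coprime_dvdl co; exact: (order_dvdG (mem_cycle v r)).
Qed.

Lemma U2 v p q : prime p -> prime q -> p != q -> ~~ coprime #[v] q -> ~~ coprime #[v] p ->
  exists u, [/\ u \in <[v]>, u != 1, v \notin <[u]> & coprime #[u] p].
Proof.
move=> pp pq npq cq cp.
have cop : coprime #[v.`_(p^')] p.
  apply: (pnat_coprime (pi := p^')); first exact: p_elt_constt.
  by rewrite pnatNK pnat_id.
exists v.`_(p^'); split.
- exact: cycle_constt.
- apply/negP=> /eqP /constt1P h.
  move: h; rewrite /p_elt pnatNK => h.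
  move: cq; rewrite coprime_sym prime_coprime // negbK => d.
  have := pnat_dvd d h; rewrite pnatE // inE => /eqP h2.
  by rewrite h2 eqxx in npq.
- apply/negP=> h; have := order_dvdG h; rewrite -orderE => d.
  by move: cp; rewrite (coprime_dvdl d cop).
- exact: cop.
Qed.

Lemma notin_prime v e : v != 1 -> ~~ prime #[v] -> prime #[e] -> v \notin <[e]>.
Proof.
move=> v1 npv pe; apply/negP=> h; have := order_dvdG h; rewrite -orderE.
move/(prime_nt_dvdP pe); rewrite order_eq1 => /(_ v1) h2.
by move: npv; rewrite h2 pe.
Qed.

Lemma walk_vert (G : {set gT}) x s : x \in G -> all (mem G) s ->
  path (@diff_adj gT) x s -> all (mem (diff_vert G)) s.
Proof.
elim: s x => //= z s IH x xG /andP[zG aG] /andP[hxz hp].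
rewrite (IH z) // andbT /diff_vert inE zG /=.
by apply/existsP; exists x; rewrite xG adj_sym.
Qed.

Lemma last_rev_belast (y : gT) s : last (last y s) (rev (belast y s)) = y.
Proof.
elim: s y => //= z s IH y; by rewrite rev_cons last_rcons.
Qed.
End Aux.
Theorem theorem4p11 (gT : finGroupType) (G : {group gT}) :
  ~~ cyclic G ->
  ~ (exists (H K : {group gT}) (n : nat),
       [/\ H \x K = G, cyclic H, odd #|H|, 3 <= n & K \isog 'Q_(2 ^ n)]) ->
  2 <= size (primes #|'Z(G)|) ->
  diff_connected_diam_le G 5.
Proof.
move=> ncyc _ hz.
have [p [q [ps qs npq]]] : exists p q, [/\ p \in primes #|'Z(G)|, q \in primes #|'Z(G)| & p != q].
  exists (nth 0 (primes #|'Z(G)|) 0), (nth 0 (primes #|'Z(G)|) 1).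
  rewrite !mem_nth //; last by apply: leq_trans hz.
  by rewrite nth_uniq // ?primes_uniq //; apply: leq_trans hz.
move: ps qs; rewrite !mem_primes => /and3P[pp _ pd] /and3P[pq _ qd].
have [a aZ oa] := Cauchy pp pd.
have [b bZ ob] := Cauchy pq qd.
case/centerP: aZ => aG ca.
case/centerP: bZ => bG cb.
have pa : prime #[a] by rewrite oa.
have pb : prime #[b] by rewrite ob.
have nab : #[a] != #[b] by rewrite oa ob.
have nba : #[b] != #[a] by rewrite eq_sym.
have cab : commute a b by apply: ca.
have cba : commute b a by apply: cb.
set c := a * b.
have cG : c \in G by rewrite groupM.
have Ctype : forall v, v \in G -> a \in <[v]> -> b \in <[v]> ->
    exists z, [/\ z \in G, diff_adj v z & diff_adj z c].
  move=> v vG av bv.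
  have : ~~ (G \subset <[v]>).
    apply/negP=> GS; move: ncyc; apply/negP; rewrite negbK.
    apply/cyclicP; exists v; apply/eqP; by rewrite eqEsubset GS cycle_subG vG.
  case/subsetPn => g gG gv.
  have sg : <[g]> \subset G by rewrite cycle_subG.
  have : (g.`_q \notin <[v]>) || (g.`_(q^') \notin <[v]>).
    rewrite -negb_and; apply/negP=> /andP[h1 h2]; move: gv.
    by rewrite -(consttC q g) groupM.
  case/orP=> wv.
  - have co : coprime #[g.`_q] #[a].
      apply: (pnat_coprime (pi := q)); first exact: p_elt_constt.
      by rewrite oa pnatE // inE.
    have wG : g.`_q \in G by apply: (subsetP sg); apply: cycle_constt.
    have [z [zw h1 h2]] := N (commute_sym (ca _ wG)) cba pb pa nba co wv bv av.
    exists z; split=> //; last by rewrite /c cab.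
    by case: zw => ->; rewrite ?groupM.
  - have co : coprime #[g.`_(q^')] #[b].
      apply: (pnat_coprime (pi := q^')); first exact: p_elt_constt.
      by rewrite ob pnatNK pnat_id.
    have wG : g.`_(q^') \in G by apply: (subsetP sg); apply: cycle_constt.
    have [z [zw h1 h2]] := N (commute_sym (cb _ wG)) cab pa pb nab co wv av bv.
    exists z; split=> //.
    by case: zw => ->; rewrite ?groupM.
have reach : forall v y, v \in G -> diff_adj v y ->
    exists t, [/\ path (@diff_adj gT) v t, all (mem G) t, last v t = c & size t <= 2].
  move=> v y vG hvy; have [v1 npv] := adj_elim hvy.
  have sv : <[v]> \subset G by rewrite cycle_subG.
  case: (boolP (a \in <[v]>)) => av; case: (boolP (b \in <[v]>)) => bv.
  - have [z [zG h1 h2]] := Ctype v vG av bv.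
    by exists [:: z; c]; rewrite /= h1 h2 zG cG.
  - have h := K cab pa pb nab av bv (notin_prime v1 npv pa).
    by exists [:: c]; rewrite /= h cG.
  - have h := K cba pb pa nba bv av (notin_prime v1 npv pb).
    have h' : diff_adj v c by rewrite /c cab.
    by exists [:: c]; rewrite /= h' cG.
  have fromu : forall u, u \in <[v]> -> u != 1 -> v \notin <[u]> ->
      coprime #[u] #[a] \/ coprime #[u] #[b] ->
      exists t, [/\ path (@diff_adj gT) v t, all (mem G) t, last v t = c & size t <= 2].
    move=> u uv u1 vu [co|co].
    + have uG : u \in G by apply: (subsetP sv).
      have [h1 h2] := M (commute_sym (ca _ uG)) cab pa pb nab co uv u1 vu av bv.
      by exists [:: u * a; c]; rewrite /= h1 h2 groupM // cG.
    + have uG : u \in G by apply: (subsetP sv).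
      have [h1 h2] := M (commute_sym (cb _ uG)) cba pb pa nba co uv u1 vu bv av.
      have h2' : diff_adj (u * b) c by rewrite /c cab.
      by exists [:: u * b; c]; rewrite /= h1 h2' groupM // cG.
  case: (boolP (coprime #[v] p)) => cvp.
    have [u [uv u1 vu co]] := U v1 npv cvp.
    by apply: (fromu u) => //; left; rewrite oa.
  case: (boolP (coprime #[v] q)) => cvq.
    have [u [uv u1 vu co]] := U v1 npv cvq.
    by apply: (fromu u) => //; right; rewrite ob.
  have [u [uv u1 vu co]] := U2 pp pq npq cvq cvp.
  by apply: (fromu u) => //; left; rewrite oa.
split.
  have coab : coprime #[a] #[b] by rewrite oa ob coprime_primes.
  have ac : a \in <[c]> := meml cab coab.
  have bc : b \in <[c]> := memr cab coab.
  have [z [zG h1 h2]] := Ctype c cG ac bc.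
  exists c; rewrite /diff_vert inE cG /=; apply/existsP; exists z; by rewrite zG h1.
move=> x y; rewrite !inE => /andP[xG /existsP[x' /andP[_ hx]]] /andP[yG /existsP[y' /andP[_ hy]]].
have [tx [px ax lx sx]] := reach x x' xG hx.
have [ty [py ay ly sy]] := reach y y' yG hy.
have ab : all (mem G) (rev (belast y ty)).
  rewrite all_rev; apply/allP=> w /mem_belast; rewrite inE => /orP[/eqP->//|].
  by move/(allP ay).
have pr : path (@diff_adj gT) c (rev (belast y ty)).
  rewrite -ly rev_path; rewrite (eq_path (e' := @diff_adj gT)) // => u w; exact: adj_sym.
exists (tx ++ rev (belast y ty)); split.
- rewrite /diff_walk cat_path px lx pr all_cat (walk_vert xG ax px).
  by rewrite (walk_vert cG ab pr).
- by rewrite last_cat lx -ly last_rev_belast.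
- by rewrite size_cat size_rev size_belast (leq_trans (leq_add sx sy)).
Qed.
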